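(* Let $\mathcal L=(\Sigma,X)$ be a language and $\Lambda$ a basic fuzzy theory in $\mathcal L$. Let $\mathscr F_\Lambda\dashv\mathscr U_\Lambda$ be the free-model adjunction with counit $\epsilon$, let $\mathsf T_\Lambda=\mathscr U_\Lambda\circ\mathscr F_\Lambda$ be the associated monad on $\mathbf{Fuz}_H$, and let $\mathscr K:\mathbf{Mod}(\Lambda)\to\mathbf{EM}(\mathsf T_\Lambda)$ be the comparison functor, sending a model $\mathcal A$ to the Eilenberg–Moore algebra $\mathscr U_\Lambda(\epsilon_{\mathcal A}):\mathsf T_\Lambda(\mathscr U_\Lambda\mathcal A)\to\mathscr U_\Lambda\mathcal A$ and acting as the identity on underlying arrows. Then $\mathscr K$ is an isomorphism of categories. In particular $\mathbf{Mod}(\Lambda)$ and the category $\mathbf{EM}(\mathsf T_\Lambda)$ of Eilenberg–Moore algebras of $\mathsf T_\Lambda$ are isomorphic.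
   Context: $H$ is a frame with bottom $\bot$. An $H$-fuzzy set is a pair $(A,\mu_A)$ of a set $A$ and a function $\mu_A:A\to H$; an arrow $f:(A,\mu_A)\to(B,\mu_B)$ is a function with $\mu_A(x)\le\mu_B(f(x))$; they form $\mathbf{Fuz}_H$. For $n\ge1$, $(A,\mu_A)^n=(A^n,\mu)$ with $\mu(a_1,\dots,a_n)=\bigwedge_i\mu_A(a_i)$. A signature $\Sigma=(O,\mathrm{ar},C)$ consists of a set $O$ of operation symbols with arity $\mathrm{ar}:O\to\{1,2,3,\dots\}$ and a set $C$ of constant symbols. A language is a pair $\mathcal L=(\Sigma,X)$ with $X$ a set of variables. $\mathrm{Terms}(\mathcal L)$ is the smallest set containing $X\sqcup C$ and containing $f(t_1,\dots,t_{\mathrm{ar}(f)})$ whenever $f\in O$ and all $t_i\in\mathrm{Terms}(\mathcal L)$. A formula is either an equation $s\equiv t$ ($s,t$ terms) or a membership proposition $\mathsf E_l(t)$ with $l\in H$ and $t$ a term. A sequent $\Gamma\vdash\psi$ is a pair of a (possibly infinite) set $\Gamma$ of formulas and a formula $\psi$. A fuzzy theory in $\mathcal L$ is a set of sequents. A theory is basic if for every sequent $\Gamma\vdash\phi$ in it, every formula of $\Gamma$ has the form $x\equiv y$ or $\mathsf E_l(x)$ with $x,y\in X$ variables ($\phi$ arbitrary). A $\Sigma$-algebra $\mathcal A=((A,\mu_A),\Sigma^{\mathcal A})$ is an $H$-fuzzy set $(A,\mu_A)$ together with, for each $f\in O$, an arrow $f^{\mathcal A}:(A,\mu_A)^{\mathrm{ar}(f)}\to(A,\mu_A)$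 of $\mathbf{Fuz}_H$ and, for each $c\in C$, an element $c^{\mathcal A}\in A$. A morphism of $\Sigma$-algebras is an arrow of $\mathbf{Fuz}_H$ between the carriers preserving all constants and commuting with all operations. An assignment is a function $\iota:X\to A$; evaluation: $x^{\mathcal A,\iota}=\iota(x)$, $c^{\mathcal A,\iota}=c^{\mathcal A}$, $f(t_1,\dots,t_n)^{\mathcal A,\iota}=f^{\mathcal A}(t_1^{\mathcal A,\iota},\dots,t_n^{\mathcal A,\iota})$. $\mathcal A\vDash_\iota s\equiv t$ iff $s^{\mathcal A,\iota}=t^{\mathcal A,\iota}$; $\mathcal A\vDash_\iota\mathsf E_l(t)$ iff $l\le\mu_A(t^{\mathcal A,\iota})$. $\mathcal A$ satisfies $\Gamma\vdash\psi$ if for every assignment $\iota$ with $\mathcal A\vDash_\iota\phi$ for all $\phi\in\Gamma$ one has $\mathcal A\vDash_\iota\psi$. $\mathcal A$ is a model of a theory $\Lambda$ if it satisfies every sequent of $\Lambda$. $\mathbf{Mod}(\Lambda)$ is the full subcategory of the category of $\Sigma$-algebras on the models of $\Lambda$, and $\mathscr U_\Lambda:\mathbf{Mod}(\Lambda)\to\mathbf{Fuz}_H$ is the forgetful functor to carriers; it has a left adjoint $\mathscr F_\Lambda$ (free model functor). *)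

(* Defs.v *)
From mathcomp Require Import all_boot.

Set Implicit Arguments.
Unset Strict Implicit.
Unset Printing Implicit Defensive.

Record frame := Frame {
  fr :> Type;
  fle : fr -> fr -> Prop;
  fle_refl : forall x, fle x x;
  fle_trans : forall x y z, fle x y -> fle y z -> fle x z;
  fle_anti : forall x y, fle x y -> fle y x -> x = y;
  fjoin : (fr -> Prop) -> fr;
  fjoin_ub : forall (S : fr -> Prop) x, S x -> fle x (fjoin S);
  fjoin_least : forall (S : fr -> Prop) u, (forall x, S x -> fle x u) -> fle (fjoin S) u;
  fmeet : fr -> fr -> fr;
  fmeet_lbl : forall x y, fle (fmeet x y) x;
  fmeet_lbr : forall x y, fle (fmeet x y) y;
  fmeet_glb : forall x y z, fle z x -> fle z y -> fle z (fmeet x y);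
  fmeet_distr : forall a (S : fr -> Prop),
      fmeet a (fjoin S) = fjoin (fun y => exists s, S s /\ y = fmeet a s)
}.

Definition fbot (H : frame) : H := fjoin (fun _ : H => False).
Definition ftop (H : frame) : H := fjoin (fun _ : H => True).

(* finite meet of a family indexed by 'I_n (top is the unit; only used for n >= 1) *)
Definition bigmeet (H : frame) (n : nat) (g : 'I_n -> H) : H :=
  foldr (@fmeet H) (ftop H) [seq g i | i <- enum 'I_n].

Record fuzzy (H : frame) := Fuzzy { fcar :> Type; fmu : fcar -> H }.

Definition fuz_arrow (H : frame) (A B : fuzzy H) (f : A -> B) : Prop :=
  forall x : A, fle (fmu x) (fmu (f x)).

Definition fpow_mu (H : frame) (A : fuzzy H) (n : nat) (a : 'I_n -> A) : H :=
  bigmeet (fun i => fmu (a i)).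

Record signature := Signature {
  sop : Type;
  sar : sop -> nat;
  sar_pos : forall o, 0 < sar o;
  scst : Type
}.

Record language := Language { lsig : signature; lvar : Type }.

Inductive term (L : language) : Type :=
  | TVar of lvar L
  | TCst of scst (lsig L)
  | TApp (o : sop (lsig L)) of ('I_(sar o) -> term L).

Inductive formula (H : frame) (L : language) : Type :=
  | FEq of term L & term L
  | FMem of H & term L.

Record sequent (H : frame) (L : language) :=
  Sequent { shyps : formula H L -> Prop; sconcl : formula H L }.

Definition theory (H : frame) (L : language) := sequent H L -> Prop.

Definition basic (H : frame) (L : language) (Lam : theory H L) : Prop :=
  forall s, Lam s -> forall phi, shyps s phi ->
    (exists x y : lvar L, phi = FEq H (@TVar L x) (@TVar L y)) \/
    (exists (l : H) (x : lvar L), phi = FMem l (@TVar L x)).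

Record sigalg (H : frame) (S : signature) := SigAlg {
  acar :> fuzzy H;
  aop : forall o : sop S, ('I_(sar o) -> acar) -> acar;
  aop_arrow : forall (o : sop S) (a : 'I_(sar o) -> acar),
      fle (fpow_mu a) (fmu (aop a));
  acst : scst S -> acar
}.

Fixpoint eval (H : frame) (L : language) (A : sigalg H (lsig L))
  (iota : lvar L -> A) (t : term L) : A :=
  match t with
  | TVar x => iota x
  | TCst c => acst A c
  | TApp o ts => aop (fun i => eval iota (ts i))
  end.

Definition sat (H : frame) (L : language) (A : sigalg H (lsig L))
  (iota : lvar L -> A) (phi : formula H L) : Prop :=
  match phi with
  | FEq s t => eval iota s = eval iota t
  | FMem l t => fle l (fmu (eval iota t))
  end.

Definition satisfies (H : frame) (L : language) (A : sigalg H (lsig L))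
  (s : sequent H L) : Prop :=
  forall iota : lvar L -> A,
    (forall phi, shyps s phi -> sat iota phi) -> sat iota (sconcl s).

Definition is_model (H : frame) (L : language) (Lam : theory H L)
  (A : sigalg H (lsig L)) : Prop :=
  forall s, Lam s -> satisfies A s.

Definition alg_morph (H : frame) (S : signature) (A B : sigalg H S)
  (h : A -> B) : Prop :=
  fuz_arrow h /\
  (forall c, h (acst A c) = acst B c) /\
  (forall (o : sop S) (a : 'I_(sar o) -> A), h (aop a) = aop (fun i => h (a i))).

(* A left adjoint F -| U (U : Mod(Lam) -> Fuz_H the forgetful functor), *)
(* given by universal arrows: F X is a model, eta_X : X -> U(F X), and  *)
(* every arrow f : X -> U A (A a model) factors uniquely as             *)
(* U(lift f) o eta_X with lift f : F X -> A a morphism.                 *)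
Section Adjunction.
Variables (H : frame) (L : language) (Lam : theory H L).
Variable F : fuzzy H -> sigalg H (lsig L).
Variable eta : forall X : fuzzy H, X -> F X.
Variable lift : forall (X : fuzzy H) (A : sigalg H (lsig L)), (X -> A) -> F X -> A.

Definition free_adjunction : Prop :=
  forall X : fuzzy H,
    is_model Lam (F X) /\ fuz_arrow (@eta X) /\
    forall A : sigalg H (lsig L), is_model Lam A ->
    forall f : X -> A, fuz_arrow f ->
      alg_morph (@lift X A f) /\
      (forall x, @lift X A f (@eta X x) = f x) /\
      (forall g : F X -> A, alg_morph g -> (forall x, g (@eta X x) = f x) ->
         forall y, g y = @lift X A f y).

Definition TT (X : fuzzy H) : fuzzy H := acar (F X).

Definition Tmap (X Y : fuzzy H) (f : X -> Y) : TT X -> TT Y :=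
  @lift X (F Y) (fun x => @eta Y (f x)).

(* multiplication mu_X = U(eps_{F X}) *)
Definition mult (X : fuzzy H) : TT (TT X) -> TT X :=
  @lift (TT X) (F X) (fun y => y).

Definition counit (A : sigalg H (lsig L)) : TT (acar A) -> A :=
  @lift (acar A) A (fun y => y).

Definition is_EM_alg (X : fuzzy H) (a : TT X -> X) : Prop :=
  @fuz_arrow H (TT X) X a /\
  (forall x : X, a (@eta X x) = x) /\
  (forall z : TT (TT X), a (mult z) = a (Tmap a z)).

Definition EM_morph (X : fuzzy H) (a : TT X -> X) (Y : fuzzy H) (b : TT Y -> Y)
  (h : X -> Y) : Prop :=
  fuz_arrow h /\ (forall z : TT X, h (a z) = b (Tmap h z)).

(* objects of EM(T) (underlying data) *)
Definition EMobj := {X : fuzzy H & TT X -> X}.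

Definition comparison (A : sigalg H (lsig L)) : EMobj :=
  existT (fun X : fuzzy H => TT X -> X) (acar A) (@counit A).

(* K : Mod(Lam) -> EM(T) (identity on arrows) is a well-defined functor
   which is bijective on objects and bijective on hom-sets, i.e. an
   isomorphism of categories. *)
Definition comparison_is_iso : Prop :=
  (forall A : sigalg H (lsig L), is_model Lam A -> is_EM_alg (@counit A)) /\
  (forall (A B : sigalg H (lsig L)) (h : A -> B), is_model Lam A -> is_model Lam B ->
     alg_morph h -> EM_morph (@counit A) (@counit B) h) /\
  (* K is full (faithfulness is automatic: K is the identity on arrows) *)
  (forall (A B : sigalg H (lsig L)) (h : A -> B), is_model Lam A -> is_model Lam B ->
     EM_morph (@counit A) (@counit B) h -> alg_morph h) /\
  (forall (X : fuzzy H) (a : TT X -> X), is_EM_alg a ->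
     exists A, is_model Lam A /\
       comparison A = existT (fun Y : fuzzy H => TT Y -> Y) X a) /\
  (forall A B : sigalg H (lsig L), is_model Lam A -> is_model Lam B ->
     comparison A = comparison B -> A = B).

End Adjunction.

(* Main.v *)
Require Import Defs.
From mathcomp Require Import all_boot.
From Stdlib Require Import ProofIrrelevance FunctionalExtensionality.
Set Implicit Arguments.
Unset Strict Implicit.

Lemma foldr_meet_mono (H : frame) (T : Type) (g g' : T -> H) (s : seq T) :
  (forall i, fle (g i) (g' i)) ->
  fle (foldr (@fmeet H) (ftop H) [seq g i | i <- s])
      (foldr (@fmeet H) (ftop H) [seq g' i | i <- s]).
Proof.
move=> hg; elim: s => [|x s IH] /=; first exact: fle_refl.
apply: fmeet_glb.
  exact: fle_trans (fmeet_lbl _ _) (hg x).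
exact: fle_trans (fmeet_lbr _ _) IH.
Qed.

Lemma fpow_mu_mono (H : frame) (A B : fuzzy H) (n : nat) (a : 'I_n -> A) (f : A -> B) :
  fuz_arrow f -> fle (fpow_mu a) (fpow_mu (fun i => f (a i))).
Proof. by move=> hf; apply: foldr_meet_mono => i; apply: hf. Qed.

Lemma eval_morph (H : frame) (L : language) (A B : sigalg H (lsig L))
  (h : A -> B) (iota : lvar L -> A) :
  alg_morph h -> forall t, h (eval iota t) = eval (fun x => h (iota x)) t.
Proof.
move=> [_ [hc ho]]; elim=> [x|c|o ts IH] //=.
rewrite ho; congr aop; apply: functional_extensionality => i; exact: IH.
Qed.

Theorem theorem43 (H : frame) (L : language) (Lam : theory H L)
  (F : fuzzy H -> sigalg H (lsig L))
  (eta : forall X : fuzzy H, X -> F X)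
  (lift : forall (X : fuzzy H) (A : sigalg H (lsig L)), (X -> A) -> F X -> A) :
  basic Lam ->
  @free_adjunction H L Lam F eta lift ->
  @comparison_is_iso H L Lam F eta lift.
Proof.
move=> Hbas Hadj.
have fa_comp : forall (X Y Z : fuzzy H) (f : X -> Y) (g : Y -> Z),
    fuz_arrow f -> fuz_arrow g -> fuz_arrow (fun x => g (f x)).
  by move=> X Y Z f g hf hg x; apply: fle_trans (hf x) (hg (f x)).
have am_comp : forall (A B C : sigalg H (lsig L)) (f : A -> B) (g : B -> C),
    alg_morph f -> alg_morph g -> alg_morph (fun x => g (f x)).
  move=> A B C f g [hf1 [hf2 hf3]] [hg1 [hg2 hg3]]; split; first exact: fa_comp.
  split; first by move=> c; rewrite hf2 hg2.
  by move=> o a; rewrite hf3 hg3.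
have uniq : forall (X : fuzzy H) (A : sigalg H (lsig L)), is_model Lam A ->
    forall f : X -> A, fuz_arrow f -> forall g1 g2 : F X -> A,
    alg_morph g1 -> alg_morph g2 -> (forall x, g1 (eta X x) = f x) ->
    (forall x, g2 (eta X x) = f x) -> forall y, g1 y = g2 y.
  move=> X A mA f hf g1 g2 m1 m2 e1 e2 y.
  have [_ [_ U]] := Hadj X; have [_ [_ U']] := U A mA f hf.
  by rewrite (U' g1 m1 e1) (U' g2 m2 e2).
have lift_props : forall (X : fuzzy H) (A : sigalg H (lsig L)), is_model Lam A -> forall f : X -> A, fuz_arrow f ->
    alg_morph (lift X A f) /\ forall x, lift X A f (eta X x) = f x.
  move=> X A mA f hf; have [_ [_ U]] := Hadj X; have [? [? _]] := U A mA f hf; by split.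
have fa_id : forall X : fuzzy H, fuz_arrow (fun x : X => x).
  by move=> X x; apply: fle_refl.
have FXm : forall X, is_model Lam (F X) by move=> X; case: (Hadj X).
have etaf : forall X, fuz_arrow (eta X) by move=> X; case: (Hadj X) => _ [].
have counit_m : forall A, is_model Lam A ->
    alg_morph (lift (acar A) A (fun y => y)) /\
    forall x, lift (acar A) A (fun y => y) (eta (acar A) x) = x.
  by move=> A mA; exact: lift_props A mA _ (fa_id _).
have mult_m : forall X, alg_morph (lift (TT F X) (F X) (fun y => y)) /\
    forall x, lift (TT F X) (F X) (fun y => y) (eta (TT F X) x) = x.
  by move=> X; exact: lift_props _ _ (FXm X) _ (fa_id _).
have Tmap_m : forall (X Y : fuzzy H) (f : X -> Y), fuz_arrow f ->
    alg_morph (lift X (F Y) (fun x => eta Y (f x))) /\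
    forall x, lift X (F Y) (fun x => eta Y (f x)) (eta X x) = eta Y (f x).
  move=> X Y f hf; apply: lift_props (FXm Y) _ _; exact: fa_comp hf (etaf Y).
have aop_cu : forall A, is_model Lam A -> forall o (a : 'I_(sar o) -> A),
    aop a = lift (acar A) A (fun y => y) (aop (fun i => eta (acar A) (a i))).
  move=> A mA o a; have [[_ [_ h3]] h] := counit_m A mA.
  rewrite h3; congr aop; apply: functional_extensionality => i; by rewrite h.
have acst_cu : forall A, is_model Lam A -> forall c,
    acst A c = lift (acar A) A (fun y => y) (acst (F (acar A)) c).
  by move=> A mA c; have [[_ [h2 _]] _] := counit_m A mA; rewrite h2.
rewrite /comparison_is_iso; split; last split; last split; last split.
-
  move=> A mA; have [[cm1 cm2] ce] := counit_m A mA.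
  rewrite /is_EM_alg /counit /mult /Tmap; split; first exact: cm1.
  split; first exact: ce.
  move=> z.
  have [mm me] := mult_m (acar A).
  have [tm te] := Tmap_m _ _ _ cm1.
  apply: (uniq _ A mA _ cm1 (fun z => lift (acar A) A (fun y => y) (lift (TT F (acar A)) (F (acar A)) (fun y => y) z))
     (fun z => lift (acar A) A (fun y => y) (lift (TT F (acar A)) (F (acar A)) (fun x => eta (acar A) (lift (acar A) A (fun y => y) x)) z))).
  + exact: am_comp mm (conj cm1 cm2).
  + exact: am_comp tm (conj cm1 cm2).
  + by move=> x /=; rewrite me.
  + by move=> x /=; rewrite te ce.
-
  move=> A B h mA mB hm; rewrite /EM_morph /counit /Tmap.
  have [[ma1 ma2] ae] := counit_m A mA; have [[mb1 mb2] be] := counit_m B mB.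
  have hf := hm.1.
  split; first exact: hf.
  have [tm te] := Tmap_m _ _ _ hf.
  apply: (uniq _ B mB _ hf (fun z => h (lift (acar A) A (fun y => y) z))
     (fun z => lift (acar B) B (fun y => y) (lift (acar A) (F (acar B)) (fun x => eta (acar B) (h x)) z))).
  + exact: am_comp (conj ma1 ma2) hm.
  + exact: am_comp tm (conj mb1 mb2).
  + by move=> x /=; rewrite ae.
  + by move=> x /=; rewrite te be.
-
  move=> A B h mA mB [hf hc]; rewrite /counit /Tmap in hc.
  have [[ma1 [ma2 ma3]] ae] := counit_m A mA; have [[mb1 [mb2 mb3]] be] := counit_m B mB.
  have [[tm1 [tm2 tm3]] te] := Tmap_m _ _ _ hf.
  split; first exact: hf.
  split.
    move=> c; rewrite (acst_cu A mA) hc tm2 mb2 //.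
  move=> o a; rewrite (aop_cu A mA) hc tm3 mb3; congr aop.
  apply: functional_extensionality => i; by rewrite te be.
-
  move=> X a [af [ae aa]].
  pose op := fun o (xs : 'I_(sar o) -> X) => a (aop (fun i => eta X (xs i))).
  have arr : forall o (xs : 'I_(sar o) -> X), fle (fpow_mu xs) (fmu (op o xs)).
    move=> o xs; have h1 := fpow_mu_mono xs (etaf X).
    have h2 := @aop_arrow _ _ (F X) o (fun i => eta X (xs i)).
    have h3 := af (aop (fun i => eta X (xs i))).
    exact: (fle_trans h1 (fle_trans h2 h3)).
  pose A := @SigAlg H (lsig L) X op arr (fun c => a (acst (F X) c)).
  have am : alg_morph (A:=F X) (B:=A) a.
    split; first exact: af.
    split; first by [].
    move=> o t /=; rewrite /op.
    have [[_ [_ mm3]] me] := mult_m X.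
    have [[_ [_ tm3]] te] := Tmap_m _ _ _ af.
    pose z := aop (s:=F (TT F X)) (fun i => eta (TT F X) (t i)).
    have h1 : lift (TT F X) (F X) (fun y => y) z = aop t.
      rewrite /z mm3; congr aop; apply: functional_extensionality => i; by rewrite me.
    have h2 : lift (TT F X) (F X) (fun x => eta X (a x)) z = aop (fun i => eta X (a (t i))).
      rewrite /z tm3; congr aop; apply: functional_extensionality => i; by rewrite te.
    have := aa z; rewrite /mult /Tmap h1 h2 => ->; by [].
  have key : forall iota (t : term L), eval (A:=A) iota t = a (eval (A:=F X) (fun x => eta X (iota x)) t).
    move=> iota t; rewrite (eval_morph _ am).
    have -> : (fun x => a (eta X (iota x))) = iota by apply: functional_extensionality => x; exact: ae.
    by [].
  have mA : is_model Lam A.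
    move=> s hs iota hyp.
    have hF : sat (A:=F X) (fun x => eta X (iota x)) (sconcl s).
      apply: (FXm X s hs) => phi hphi.
      have := hyp _ hphi.
      case: (Hbas s hs phi hphi) => [[x [y ->]] | [l [x ->]]] /=.
        by move=> ->.
      by move=> hl; apply: fle_trans hl (etaf X _).
    move: hF; case: (sconcl s) => [u v|l u] /=.
      by rewrite !key => ->.
    by rewrite key => hl; apply: fle_trans hl (af _).
  exists A; split; first exact: mA.
  have e : counit lift (A:=A) = a.
    apply: functional_extensionality => y; symmetry.
    have [cm ce] := counit_m A mA.
    apply: (uniq X A mA (fun x => x) (fa_id _) a (lift (acar A) A (fun y => y))) => //.
  by rewrite /comparison e.
-
  move=> [cA opA arA cstA] [cB opB arB cstB] mA mB e.
  have e1 := f_equal (@projT1 _ _) e; simpl in e1; subst cB.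
  have e2 := inj_pair2 _ _ _ _ _ e.
  have eop : opA = opB.
    apply: functional_extensionality_dep => o; apply: functional_extensionality => x.
    have := aop_cu _ mA o x; have := aop_cu _ mB o x; rewrite /counit in e2; simpl.
    by rewrite e2 => -> ->.
  subst opB.
  have ec : cstA = cstB.
    apply: functional_extensionality => c.
    have := acst_cu _ mA c; have := acst_cu _ mB c; rewrite /counit in e2; simpl.
    by rewrite e2 => -> ->.
  subst cstB.
  by rewrite (proof_irrelevance _ arA arB).
Qed.
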